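(* Consider a mean-variance team stochastic game as described in the context and let $\tilde{\boldsymbol{\mu}}\in\mathcal{U}$ be a first-order stationary point. For $\mu_i\in\mathcal{U}_i$ write $\delta_{\tilde\mu_i}^{\mu_i}=(1-\delta)\tilde\mu_i+\delta\mu_i$ and $D_i(\mu_i)=\frac{\mathrm{d}}{\mathrm{d}\delta}J(\delta_{\tilde\mu_i}^{\mu_i},\tilde{\boldsymbol{\mu}}_{-i})\big|_{\delta=0}$. (1) If $D_i(\mu_i)<0$ for every agent $i\in\mathcal{N}$ and every $\mu_i\in\mathcal{U}_i$ with $\mu_i\neq\tilde\mu_i$, then $\tilde{\boldsymbol{\mu}}$ is a strict local Nash equilibrium. (2) If there exist agents $i$ and policies $\mu_i'\in\mathcal{U}_i$ with $D_i(\mu'_i)=0$, then $\tilde{\boldsymbol{\mu}}$ is a local Nash equilibrium if and only if for every such agent $i$ and such $\mu_i'$ there exists $\bar\delta\in(0,1]$ such that for all $\delta\in(0,\bar\delta]$, $\eta(\delta_{\tilde\mu_i}^{\mu_i'},\tilde{\boldsymbol{\mu}}_{-i})=\eta(\tilde\mu_i,\tilde{\boldsymbol{\mu}}_{-i})$.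
   Context: Game: finite agents $\mathcal{N}=\{1,\dots,N\}$, finite state space $\mathcal{S}$, finite action sets $\mathcal{A}_i$, $\mathcal{A}=\prod_i\mathcal{A}_i$, transition kernel $P(s'|s,\boldsymbol{a})$, common reward $r:\mathcal{S}\times\mathcal{A}\to\mathbb{R}$. Policies $\mu_i:\mathcal{S}\to\Delta(\mathcal{A}_i)$ (set $\mathcal{U}_i$); joint policies $\boldsymbol{\mu}\in\mathcal{U}=\prod_i\mathcal{U}_i$ with $\boldsymbol{\mu}(\boldsymbol{a}|s)=\prod_i\mu_i(a_i|s)$; $(\mu_i,\boldsymbol{\mu}_{-i})$ means agent $i$ uses $\mu_i$, others use $\boldsymbol{\mu}_{-i}$; $(1-\delta)\tilde\mu_i+\delta\mu_i$ is the policy $s\mapsto(1-\delta)\tilde\mu_i(\cdot|s)+\delta\mu_i(\cdot|s)$. Standing assumption: the chain $P^{\boldsymbol{\mu}}(s'|s)=\sum_{\boldsymbol{a}}\boldsymbol{\mu}(\boldsymbol{a}|s)P(s'|s,\boldsymbol{a})$ is ergodic for every $\boldsymbol{\mu}\in\mathcal{U}$, with stationary distribution $\pi^{\boldsymbol{\mu}}$. $\eta(\boldsymbol{\mu})=\eta^{\boldsymbol{\mu}}=\sum_s\pi^{\boldsymbol{\mu}}(s)\sum_{\boldsymbol{a}}\boldsymbol{\mu}(\boldsymbol{a}|s)r(s,\boldsymbol{a})$ (long-run average reward); $\zeta^{\boldsymbol{\mu}}=\sum_s\pi^{\boldsymbol{\mu}}(s)\sum_{\boldsymbol{a}}\boldsymbol{\mu}(\boldsymbol{a}|s)(r(s,\boldsymbol{a})-\eta^{\boldsymbol{\mu}})^2$;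 for fixed $\beta\ge0$, $J(\boldsymbol{\mu})=\eta^{\boldsymbol{\mu}}-\beta\zeta^{\boldsymbol{\mu}}$. Derivatives at $\delta=0$ are right derivatives. A joint policy $\tilde{\boldsymbol{\mu}}$ is a first-order stationary point if $\frac{\mathrm{d}}{\mathrm{d}\delta}J((1-\delta)\tilde\mu_i+\delta\mu_i,\tilde{\boldsymbol{\mu}}_{-i})|_{\delta=0}\le0$ for all $i\in\mathcal{N}$, $\mu_i\in\mathcal{U}_i$. A joint policy $\boldsymbol{\mu}^*$ is a local Nash equilibrium if there is $\bar\delta\in(0,1]$ such that for all $\delta\in(0,\bar\delta]$, all $i\in\mathcal{N}$ and all $\mu_i\in\mathcal{U}_i$: $J(\mu_i^*,\boldsymbol{\mu}^*_{-i})\ge J((1-\delta)\mu_i^*+\delta\mu_i,\boldsymbol{\mu}^*_{-i})$; it is a strict local Nash equilibrium if the inequality is strict for all $\mu_i\neq\mu_i^*$. *)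

(* Defs.v *)
From HB Require Import structures.
From mathcomp Require Import all_boot all_order all_algebra.
From mathcomp Require Import all_classical all_reals all_analysis.
Set Implicit Arguments. Unset Strict Implicit. Unset Printing Implicit Defensive.
Import Order.TTheory GRing.Theory Num.Theory.
Import numFieldNormedType.Exports.
Local Open Scope classical_set_scope.
Local Open Scope ring_scope.

Section MVGame.
Variables (R : realType) (N : nat) (S : finType) (A : 'I_N -> finType).

Definition jact := {dffun forall i : 'I_N, A i}.

Definition is_dist (T : finType) (p : T -> R) :=
  (forall x, 0 <= p x) /\ \sum_x p x = 1.

Definition is_kernel (P : S -> jact -> S -> R) :=
  forall s a, is_dist (P s a).

Definition is_policy (i : 'I_N) (mu : S -> A i -> R) :=
  forall s, is_dist (mu s).

Definition jpolicy := forall i : 'I_N, S -> A i -> R.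
Definition is_jpolicy (mu : jpolicy) := forall i, is_policy (mu i).

Definition jprob (mu : jpolicy) (s : S) (a : jact) : R :=
  \prod_(i < N) mu i s (a i).

Definition chain (P : S -> jact -> S -> R) (mu : jpolicy) (s s' : S) : R :=
  \sum_a jprob mu s a * P s a s'.

Fixpoint kpow (K : S -> S -> R) (n : nat) (s s' : S) : R :=
  match n with
  | 0%N => if s == s' then 1 else 0
  | n'.+1 => \sum_t kpow K n' s t * K t s'
  end.

(* ergodic finite chain: irreducible and aperiodic, i.e. some power of the
   transition matrix has all entries positive *)
Definition ergodic (K : S -> S -> R) :=
  exists n : nat, forall s s', 0 < kpow K n s s'.

Definition is_stationary (K : S -> S -> R) (pi : {ffun S -> R}) :=
  is_dist pi /\ forall s', \sum_s pi s * K s s' = pi s'.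

(* the stationary distribution pi^mu (unique under ergodicity) *)
Definition statd (K : S -> S -> R) : {ffun S -> R} :=
  xget [ffun=> 0] [set pi | is_stationary K pi].

Variables (P : S -> jact -> S -> R) (r : S -> jact -> R) (beta : R).

Definition etaR (mu : jpolicy) : R :=
  \sum_s statd (chain P mu) s * \sum_a jprob mu s a * r s a.

Definition zeta (mu : jpolicy) : R :=
  \sum_s statd (chain P mu) s *
    \sum_a jprob mu s a * (r s a - etaR mu) ^+ 2.

Definition J (mu : jpolicy) : R := etaR mu - beta * zeta mu.

Definition mixp (i : 'I_N) (d : R) (mut mu : S -> A i -> R) : S -> A i -> R :=
  fun s a => (1 - d) * mut s a + d * mu s a.

Definition dev (mut : jpolicy) (i : 'I_N) (mu : S -> A i -> R) : jpolicy :=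
  @dfwith _ (fun j : 'I_N => S -> A j -> R) mut i mu.

Definition rderiv0 (f : R -> R) : R :=
  lim ((fun h : R => h^-1 * (f h - f 0)) @ 0^'+).

Definition Dder (mut : jpolicy) (i : 'I_N) (mu : S -> A i -> R) : R :=
  rderiv0 (fun d => J (dev mut (mixp d (mut i) mu))).

Definition first_order_stationary (mut : jpolicy) :=
  forall (i : 'I_N) (mu : S -> A i -> R), is_policy mu -> Dder mut mu <= 0.

Definition local_NE (mus : jpolicy) :=
  exists dbar : R, 0 < dbar <= 1 /\
    forall d : R, 0 < d <= dbar ->
    forall (i : 'I_N) (mu : S -> A i -> R), is_policy mu ->
      J (dev mus (mixp d (mus i) mu)) <= J mus.

Definition strict_local_NE (mus : jpolicy) :=
  exists dbar : R, 0 < dbar <= 1 /\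
    forall d : R, 0 < d <= dbar ->
    forall (i : 'I_N) (mu : S -> A i -> R), is_policy mu -> mu <> mus i ->
      J (dev mus (mixp d (mus i) mu)) < J mus.

End MVGame.

(* Main.v *)
Require Import Defs.
From HB Require Import structures.
From mathcomp Require Import all_boot all_order all_algebra.
From mathcomp Require Import all_classical all_reals all_analysis.
From mathcomp Require Import ring lra.
Set Implicit Arguments. Unset Strict Implicit. Unset Printing Implicit Defensive.
Import Order.TTheory GRing.Theory Num.Theory.
Import numFieldNormedType.Exports.
Local Open Scope classical_set_scope.
Local Open Scope ring_scope.
Lemma lim_right (R : realType) (f : R -> R) (L c : R) :
  (forall h, 0 < h <= 1 -> `|f h - L| <= c * h) -> lim (f @ 0^'+) = L.
Proof.
move=> H. apply: cvg_lim => //. apply/cvgrPdist_le => eps eps0.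
have e1 : 0 < Num.min 1 (eps / (`|c| + 1)).
  by rewrite lt_min ltr01 /= divr_gt0 // ltr_pwDr.
near=> h.
have h0 : 0 < h by near: h; exact: nbhs_right_gt.
have h1 : h < Num.min 1 (eps / (`|c| + 1)) by near: h; exact: nbhs_right_lt.
move: h1; rewrite lt_min => /andP[h1 h2].
rewrite distrC; apply: le_trans (H h _) _; first by rewrite h0 ltW.
have hc : c <= `|c| by exact: ler_norm.
rewrite ltr_pdivlMr ?ltr_pwDr // in h2.
nra.
Unshelve. all: end_near.
Qed.

Lemma sum_enum (R : nmodType) (S : finType) (F : S -> R) : \sum_x F x = \sum_(i < #|S|) F (enum_val i).
Proof. rewrite [LHS](reindex (@enum_val S predT)) //=. by exists enum_rank => x _; [rewrite enum_valK | rewrite enum_rankK]. Qed.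

Lemma inv_fun (R : fieldType) (S : finType) (M : S -> S -> R) :
  (forall x : S -> R, (forall s, \sum_t M s t * x t = 0) -> forall t, x t = 0) ->
  exists G : S -> S -> R, forall s u, \sum_t M s t * G t u = (s == u)%:R.
Proof.
move=> H.
pose A : 'M[R]_#|S| := \matrix_(i, j) M (enum_val i) (enum_val j).
have uA : A \in unitmx.
  rewrite -unitmx_tr -row_free_unit -kermx_eq0. apply/eqP/row_matrixP => k.
  rewrite row0.
  set v := row k (kermx A^T).
  have hv : v *m A^T = 0 by rewrite /v -row_mul mulmx_ker row0.
  pose x := fun t => v 0 (enum_rank t) : R.
  have hx : forall t, x t = 0.
    apply: H => s.
    apply: (@etrans _ _ ((v *m A^T) 0 (enum_rank s))); last by rewrite hv mxE.
    rewrite mxE [LHS](sum_enum (fun t => M s t * x t)).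
    apply eq_bigr => i _.
    by rewrite /x enum_valK mulrC; congr (_ * _); rewrite /A !mxE enum_rankK.
  apply/rowP => j. rewrite [RHS]mxE.
  by have := hx (enum_val j); rewrite /x enum_valK.
exists (fun t u => invmx A (enum_rank t) (enum_rank u)) => s u.
have := congr1 (fun m : 'M[R]_#|S| => m (enum_rank s) (enum_rank u)) (mulmxV uA).
rewrite /= !mxE (inj_eq enum_rank_inj) => <-.
rewrite [LHS](sum_enum (fun t => M s t * invmx A (enum_rank t) (enum_rank u))).
apply eq_bigr => i _.
by rewrite !mxE !enum_rankK enum_valK.
Qed.

Lemma natr_if (R : nzSemiRingType) (b : bool) : (b%:R : R) = if b then 1 else 0.
Proof. by case: b. Qed.

Section Markov.
Variables (R : realType) (S : finType).
Definition stochK (K : S -> S -> R) := (forall s t, 0 <= K s t) /\ (forall s, \sum_t K s t = 1).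

Lemma delta_sumr (x : S -> R) s : \sum_t (if s == t then 1 else 0) * x t = x s.
Proof.
rewrite (bigD1 s) //= eqxx mul1r big1 ?addr0 // => t ts.
by rewrite eq_sym (negbTE ts) mul0r.
Qed.

Lemma delta_suml (x : S -> R) t : \sum_s x s * (if s == t then 1 else 0) = x t.
Proof.
rewrite (bigD1 t) //= eqxx mulr1 big1 ?addr0 // => s st.
by rewrite (negbTE st) mulr0.
Qed.

Lemma kpow_right (K : S -> S -> R) (x : S -> R) : (forall s, \sum_t K s t * x t = x s) ->
  forall n s, \sum_t kpow K n s t * x t = x s.
Proof.
move=> hx; elim=> [|n IH] s /=; first exact: delta_sumr.
under eq_bigr do rewrite mulr_suml.
rewrite exchange_big /= -[RHS]IH; apply: eq_bigr => u _.
by rewrite -hx mulr_sumr; apply: eq_bigr => t _; rewrite mulrA.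
Qed.

Lemma kpow_left (K : S -> S -> R) (f : S -> R) : (forall t, \sum_s f s * K s t = f t) ->
  forall n t, \sum_s f s * kpow K n s t = f t.
Proof.
move=> hf; elim=> [|n IH] t /=; first exact: delta_suml.
under eq_bigr do rewrite mulr_sumr.
rewrite exchange_big /= -[RHS]hf; apply: eq_bigr => u _.
by rewrite -IH mulr_suml; apply: eq_bigr => s _; rewrite mulrA.
Qed.

Lemma kpow_ge0 (K : S -> S -> R) : stochK K -> forall n s t, 0 <= kpow K n s t.
Proof.
move=> [K0 _]; elim=> [|n IH] s t /=; first by case: eqP.
by apply: sumr_ge0 => u _; apply: mulr_ge0.
Qed.

Lemma kpow_sum1 (K : S -> S -> R) : stochK K -> forall n s, \sum_t kpow K n s t = 1.
Proof.
move=> [_ K1] n s.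
have := @kpow_right K (fun _ => 1) _ n s.
under eq_bigr do rewrite mulr1. apply.
by move=> u; under eq_bigr do rewrite mulr1; exact: K1.
Qed.

Lemma stat_exists (K : S -> S -> R) (s0 : S) : stochK K -> exists pi, is_stationary K pi.
Proof.
move=> [K0 K1].
pose F t s := K s t - (s == t)%:R.
have [[x [hx [t0 ht0]]]|hno] := pselect (exists x : S -> R,
   (forall t, \sum_s F t s * x s = 0) /\ exists t, x t != 0); last first.
  exfalso.
  have [G hG] : exists G : S -> S -> R, forall s u, \sum_t F s t * G t u = (s == u)%:R.
    apply: inv_fun => x hx t; case: (eqVneq (x t) 0) => // ne.
    by exfalso; apply: hno; exists x; split => //; exists t.
  have : \sum_t \sum_s F t s * G s s0 = 1.
    under eq_bigr do rewrite hG.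
    by rewrite (bigD1 s0) //= eqxx big1 ?addr0 // => t /negbTE ->.
  rewrite exchange_big /= big1 => [/eqP|s _]; first by rewrite eq_sym oner_eq0.
  rewrite -mulr_suml /F sumrB K1.
  rewrite (bigD1 s) //= eqxx big1 ?addr0 ?subrr ?mul0r // => t /negbTE.
  by rewrite eq_sym => ->.
have hxK t : \sum_s x s * K s t = x t.
  have := hx t; rewrite /F.
  under eq_bigr do rewrite mulrBl.
  rewrite sumrB => /eqP; rewrite subr_eq0 => /eqP e.
  under eq_bigr do rewrite mulrC. rewrite e.
  rewrite (bigD1 t) //= eqxx mul1r big1 ?addr0 // => s /negbTE ->; by rewrite mul0r.
pose w s := `|x s|.
have w0 s : 0 <= w s by rewrite /w.
have hwK t : \sum_s w s * K s t = w t.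
  pose e t := \sum_s w s * K s t - w t.
  have e0 t' : 0 <= e t'.
    rewrite /e subr_ge0 /w -{1}hxK.
    apply: le_trans (ler_norm_sum _ _ _) _.
    by apply: ler_sum => s _; rewrite normrM (ger0_norm (K0 _ _)).
  have se : \sum_t e t = 0.
    rewrite /e sumrB exchange_big /=.
    under eq_bigr do rewrite -mulr_sumr K1 mulr1.
    by rewrite subrr.
  by apply/eqP; rewrite -subr_eq0; apply/eqP; exact: (psumr_eq0P (fun i _ => e0 i) se).
have sw : 0 < \sum_s w s.
  rewrite (bigD1 t0) //=.
  have h1 : 0 < w t0 by rewrite /w normr_gt0.
  have h2 : 0 <= \sum_(s | s != t0) w s by apply: sumr_ge0.
  lra.
exists [ffun s => w s / \sum_s w s]; split; first split.
- by move=> s; rewrite ffunE divr_ge0 // ltW.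
- under eq_bigr do rewrite ffunE.
  by rewrite -mulr_suml divff // gt_eqF.
- move=> t; under eq_bigr do rewrite ffunE mulrAC.
  by rewrite -mulr_suml hwK ffunE.
Qed.

Lemma statd_stat (K : S -> S -> R) (s0 : S) : stochK K -> is_stationary K (statd K).
Proof. by move=> hK; rewrite /statd; apply: xgetPex; exact: stat_exists s0 hK. Qed.

Lemma stat_pos (K : S -> S -> R) pi : stochK K -> ergodic K -> is_stationary K pi ->
  forall s, 0 < pi s.
Proof.
move=> hK [n hn] [[p0 p1] hst] s.
have [[t pt]|hno] := pselect (exists t, 0 < pi t); last first.
  exfalso; move: p1; rewrite big1 => [/eqP|t _]; first by rewrite eq_sym oner_eq0.
  apply/eqP; rewrite eq_le p0 andbT leNgt; apply/negP => h; apply: hno; by exists t.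
rewrite -(kpow_left hst n s) (bigD1 t) //=.
have h1 : 0 < pi t * kpow K n t s by apply: mulr_gt0.
have h2 : 0 <= \sum_(i | i != t) pi i * kpow K n i s.
  by apply: sumr_ge0 => i _; apply: mulr_ge0 => //; apply: kpow_ge0.
lra.
Qed.

Lemma harm_const (K : S -> S -> R) (x : S -> R) : stochK K -> ergodic K ->
  (forall s, \sum_t K s t * x t = x s) -> forall s t, x s = x t.
Proof.
move=> hK [n hn] hx s.
have [m _ hm] := @arg_maxP _ R S s predT x isT.
have hm' : forall t, x t <= x m by move=> t; exact: hm.
have key : forall t, x t = x m.
  have e : \sum_t kpow K n m t * (x m - x t) = 0.
    under eq_bigr do rewrite mulrBr.
    rewrite sumrB -mulr_suml kpow_sum1 // mul1r kpow_right // subrr //.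
  move=> t; have := psumr_eq0P _ e (isT : true) (i := t).
  move=> /(_ _)/eqP; rewrite mulf_eq0 gt_eqF ?hn //= subr_eq0 => /(_ _)/eqP -> //.
  by move=> i _; apply: mulr_ge0; [apply: kpow_ge0 | rewrite subr_ge0].
by move=> t; rewrite !key.
Qed.
End Markov.

Section Core.
Variables (R : realType) (S X : finType) (P : S -> X -> S -> R).
Hypothesis P0 : forall s a t, 0 <= P s a t.
Hypothesis P1 : forall s a, \sum_t P s a t = 1.

Definition stoch (j : S -> X -> R) := forall s, (forall a, 0 <= j s a) /\ \sum_a j s a = 1.
Definition Kc (j : S -> X -> R) (s t : S) : R := \sum_a j s a * P s a t.
Definition V (j : S -> X -> R) (q : S -> X -> R) : R :=
  \sum_s statd (Kc j) s * \sum_a j s a * q s a.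
Definition mixj (d : R) (j0 j1 : S -> X -> R) (s : S) (a : X) : R :=
  (1 - d) * j0 s a + d * j1 s a.

Lemma Kc_stoch j : stoch j -> stochK (Kc j).
Proof.
move=> hj; split=> [s t|s].
  by apply: sumr_ge0 => a _; apply: mulr_ge0 => //; case: (hj s).
rewrite /Kc exchange_big /=; case: (hj s) => _ <-.
by apply: eq_bigr => a _; rewrite -mulr_sumr P1 mulr1.
Qed.

Lemma mixj_stoch d j0 j1 : 0 <= d <= 1 -> stoch j0 -> stoch j1 -> stoch (mixj d j0 j1).
Proof.
move=> /andP[d0 d1] h0 h1 s; case: (h0 s) => a0 s0; case: (h1 s) => a1 s1; split.
  move=> a; rewrite /mixj; apply: addr_ge0; apply: mulr_ge0 => //; by rewrite subr_ge0.
rewrite /mixj big_split /= -!mulr_sumr s0 s1; ring.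
Qed.

Lemma Kc_mix d j0 j1 s t : Kc (mixj d j0 j1) s t = (1 - d) * Kc j0 s t + d * Kc j1 s t.
Proof.
rewrite /Kc /mixj !mulr_sumr -big_split /=; apply: eq_bigr => a _; ring.
Qed.

Lemma stat_dist j (s0 : S) : stoch j -> is_stationary (Kc j) (statd (Kc j)).
Proof. by move=> hj; apply: (statd_stat s0); apply: Kc_stoch. Qed.

Lemma V_lin j (s0 : S) q1 q2 c1 c2 c3 : stoch j ->
  V j (fun s a => c1 * q1 s a + c2 * q2 s a + c3) = c1 * V j q1 + c2 * V j q2 + c3.
Proof.
move=> hj; have [[_ p1] _] := stat_dist s0 hj.
have inner s : \sum_a j s a * (c1 * q1 s a + c2 * q2 s a + c3) =
    c1 * (\sum_a j s a * q1 s a) + c2 * (\sum_a j s a * q2 s a) + c3.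
  case: (hj s) => _ js.
  rewrite [c3 in RHS](_ : c3 = \sum_a j s a * c3); last by rewrite -mulr_suml js mul1r.
  rewrite !mulr_sumr -!big_split /=; apply: eq_bigr => a _; ring.
rewrite /V; under eq_bigr do rewrite inner.
rewrite [c3 in RHS](_ : c3 = \sum_s statd (Kc j) s * c3); last by rewrite -mulr_suml p1 mul1r.
rewrite !mulr_sumr -!big_split /=; apply: eq_bigr => s _; ring.
Qed.

Lemma V_ext j q q' : (forall s a, q s a = q' s a) -> V j q = V j q'.
Proof. by move=> h; rewrite /V; apply: eq_bigr => s _; congr (_ * _); apply: eq_bigr => a _; rewrite h. Qed.

Variables (r : S -> X -> R) (beta : R).
Definition Jv j := V j r - beta * V j (fun s a => (r s a - V j r) ^+ 2).
Definition rt (e : R) s a := r s a - beta * (r s a - e) ^+ 2.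

Lemma Jv_decomp j (s0 : S) e : stoch j ->
  Jv j = V j (rt e) + beta * (V j r - e) ^+ 2.
Proof.
move=> hj; rewrite /Jv.
set e' := V j r.
have h1 : V j (fun s a => (r s a - e') ^+ 2) =
   V j (fun s a => (r s a - e) ^+ 2) - (e' - e) ^+ 2.
  rewrite (@V_ext j _ (fun s a => 1 * (fun s a => (r s a - e) ^+ 2) s a + (-2 * (e' - e)) * r s a
       + ((e' - e)^+2 + 2 * (e' - e) * e))); last by move=> s a /=; ring.
  rewrite V_lin // -/e'; ring.
have h2 : V j (rt e) = e' - beta * V j (fun s a => (r s a - e) ^+ 2).
  rewrite (@V_ext j _ (fun s a => 1 * r s a + (- beta) * (fun s a => (r s a - e) ^+ 2) s a + 0)); last by move=> s a /=; rewrite /rt; ring.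
  by rewrite V_lin // -/e'; ring.
rewrite h1 h2; ring.
Qed.



Section Base.
Variables (j0 : S -> X -> R) (s0 : S).
Hypothesis hj0 : stoch j0.
Hypothesis erg0 : ergodic (Kc j0).

Let pi0 := statd (Kc j0).
Let M0 (s t : S) : R := (if s == t then 1 else 0) - Kc j0 s t + pi0 t.

Lemma pi0_stat : is_stationary (Kc j0) pi0.
Proof. exact: stat_dist s0 hj0. Qed.

Lemma pi0_pos s : 0 < pi0 s.
Proof. exact: (stat_pos (Kc_stoch hj0) erg0 pi0_stat). Qed.

Lemma M0_inj (x : S -> R) : (forall s, \sum_t M0 s t * x t = 0) -> forall t, x t = 0.
Proof.
move=> hx.
have [[p0 p1] pst] := pi0_stat.
set c := \sum_t pi0 t * x t.
have row s : \sum_t M0 s t * x t = x s - \sum_t Kc j0 s t * x t + c.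
  rewrite /M0; under eq_bigr do rewrite !mulrDl mulNr.
  by rewrite !big_split /= sumrN (delta_sumr x s).
have cK : \sum_s pi0 s * \sum_t Kc j0 s t * x t = c.
  under eq_bigr do rewrite mulr_sumr.
  rewrite exchange_big /=; apply: eq_bigr => t _.
  by rewrite -[RHS](congr1 (fun z => z * x t) (pst t)) mulr_suml; apply: eq_bigr => s _; rewrite mulrA.
have c0 : c = 0.
  have : \sum_s pi0 s * (\sum_t M0 s t * x t) = 0 by rewrite big1 // => s _; rewrite hx mulr0.
  under eq_bigr do rewrite row !mulrDr mulrN.
  rewrite !big_split /= sumrN cK -/c -mulr_suml p1 mul1r.
  by move=> e; rewrite -e; ring.
have harm s : \sum_t Kc j0 s t * x t = x s.
  by have := hx s; rewrite row c0 addr0 => /eqP; rewrite subr_eq0 => /eqP.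
have hc := harm_const (Kc_stoch hj0) erg0 harm.
move=> t; move: c0; rewrite /c.
under eq_bigr do rewrite (hc _ t).
by rewrite -mulr_suml p1 mul1r.
Qed.

Lemma G_exists : exists G : S -> S -> R, forall s u, \sum_t M0 s t * G t u = (s == u)%:R.
Proof. exact: inv_fun M0_inj. Qed.

Variable G : S -> S -> R.
Hypothesis hG : forall s u, \sum_t M0 s t * G t u = (s == u)%:R.

Definition hq (q : S -> X -> R) (u : S) : R := \sum_t G u t * (\sum_a j0 t a * q t a).

Lemma poisson q s : hq q s - \sum_t Kc j0 s t * hq q t = \sum_a j0 s a * q s a - V j0 q.
Proof.
have [[p0 p1] pst] := pi0_stat.
set y := fun t => \sum_a j0 t a * q t a.
have My s' : \sum_t M0 s' t * hq q t = y s'.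
  rewrite /hq; under eq_bigr do rewrite mulr_sumr.
  rewrite exchange_big /=.
  under eq_bigr do under eq_bigr do rewrite mulrA.
  under eq_bigr do rewrite -mulr_suml hG natr_if.
  by rewrite (delta_sumr y s').
set c := \sum_t pi0 t * hq q t.
have row s' : \sum_t M0 s' t * hq q t = hq q s' - \sum_t Kc j0 s' t * hq q t + c.
  rewrite /M0; under eq_bigr do rewrite !mulrDl mulNr.
  by rewrite !big_split /= sumrN (delta_sumr (hq q) s').
have cK : \sum_s pi0 s * \sum_t Kc j0 s t * hq q t = c.
  under eq_bigr do rewrite mulr_sumr.
  rewrite exchange_big /=; apply: eq_bigr => t _.
  by rewrite -[RHS](congr1 (fun z => z * hq q t) (pst t)) mulr_suml; apply: eq_bigr => s' _; rewrite mulrA.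
have cV : c = V j0 q.
  have : \sum_s pi0 s * (\sum_t M0 s t * hq q t) = V j0 q.
    by rewrite /V; apply: eq_bigr => s' _; rewrite My.
  under eq_bigr do rewrite row !mulrDr mulrN.
  rewrite !big_split /= sumrN cK -/c -mulr_suml p1 mul1r.
  by move=> e; rewrite -e; ring.
by have := My s; rewrite row cV => e; rewrite -/(y s) -e; ring.
Qed.

Definition Qf (q : S -> X -> R) s a := q s a + \sum_t P s a t * hq q t.

Lemma perfdiff j q : stoch j ->
  V j q - V j0 q = \sum_s statd (Kc j) s * \sum_a (j s a - j0 s a) * Qf q s a.
Proof.
move=> hj; have [[p0 p1] pst] := stat_dist s0 hj.
set pj := statd (Kc j).
have KQ (k : S -> X -> R) s : \sum_a k s a * (\sum_t P s a t * hq q t) = \sum_t Kc k s t * hq q t.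
  rewrite /Kc; under eq_bigr do rewrite mulr_sumr.
  rewrite exchange_big /=; apply: eq_bigr => t _.
  by rewrite mulr_suml; apply: eq_bigr => a _; rewrite mulrA.
have inner s : \sum_a (j s a - j0 s a) * Qf q s a =
   \sum_a j s a * q s a - V j0 q + (\sum_t Kc j s t * hq q t - hq q s).
  rewrite /Qf; under eq_bigr do rewrite mulrDr mulrBl mulrBl.
  rewrite big_split /= !sumrB !KQ.
  have := poisson q s; lra.
under [RHS]eq_bigr do rewrite inner !mulrDr mulrN.
rewrite !big_split /= sumrN.
have e1 : \sum_s pj s * (\sum_t Kc j s t * hq q t) = \sum_s pj s * hq q s.
  under eq_bigr do rewrite mulr_sumr.
  rewrite exchange_big /=; apply: eq_bigr => t _.
  by rewrite -[in RHS](pst t) mulr_suml; apply: eq_bigr => s' _; rewrite mulrA.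
rewrite e1; under [X in _ + (_ + X)]eq_bigr do rewrite mulrN.
rewrite sumrN -mulr_suml p1 mul1r /V -/pj; ring.
Qed.



Lemma stochK_le1 (K : S -> S -> R) s t : stochK K -> K s t <= 1.
Proof.
move=> [K0 K1]; rewrite -(K1 s) (bigD1 t) //= lerDl; exact: sumr_ge0.
Qed.

Lemma dist_le1 (p : {ffun S -> R}) s : is_dist p -> 0 <= p s <= 1.
Proof.
move=> [p0 p1]; rewrite p0 /= -p1 (bigD1 s) //= lerDl; exact: sumr_ge0.
Qed.

Definition CG := \sum_t \sum_u `|G t u|.

Lemma pert j1 d u : stoch j1 -> 0 <= d <= 1 ->
  `|statd (Kc (mixj d j0 j1)) u - pi0 u| <= d * CG.
Proof.
move=> hj1 hd.
have hjd := mixj_stoch hd hj0 hj1.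
have [[pd0 pd1] pdst] := stat_dist s0 hjd.
have [[p0 p1] pst] := pi0_stat.
set pd := statd (Kc (mixj d j0 j1)).
pose x s := pd s - pi0 s.
pose y t := \sum_s pd s * (Kc j1 s t - Kc j0 s t).
have xM t : \sum_s x s * M0 s t = d * y t.
  have sx : \sum_s x s = 0 by rewrite /x sumrB pd1 p1 subrr.
  rewrite /M0; under eq_bigr do rewrite !mulrDr mulrN.
  rewrite !big_split /= sumrN (delta_suml x t) -mulr_suml sx mul0r addr0.
  rewrite /x; under eq_bigr do rewrite mulrBl.
  rewrite sumrB pst.
  have : pd t = \sum_s pd s * Kc j0 s t + d * y t.
    rewrite -{1}pdst /y mulr_sumr -big_split /=; apply: eq_bigr => s _.
    rewrite Kc_mix; ring.
  lra.
have xu : x u = d * \sum_t y t * G t u.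
  transitivity (\sum_t (\sum_s x s * M0 s t) * G t u).
    under eq_bigr do rewrite mulr_suml.
    rewrite exchange_big /=.
    under eq_bigr do (under eq_bigr do rewrite -mulrA; rewrite -mulr_sumr hG natr_if).
    by rewrite (delta_suml x u).
  by rewrite mulr_sumr; apply: eq_bigr => t _; rewrite xM mulrA.
have yb t : `|y t| <= 1.
  apply: le_trans (ler_norm_sum _ _ _) _.
  rewrite -pd1; apply: ler_sum => s _.
  rewrite normrM (ger0_norm (pd0 s)) ler_piMr //.
  have := stochK_le1 s t (Kc_stoch hj1); have := stochK_le1 s t (Kc_stoch hj0).
  have := (Kc_stoch hj1).1 s t; have := (Kc_stoch hj0).1 s t.
  move=> a b c e; rewrite ler_norml; apply/andP; split; lra.
rewrite -/(x u) xu normrM (ger0_norm (proj1 (andP hd))) ler_wpM2l //; first by case/andP: hd.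
apply: le_trans (ler_norm_sum _ _ _) _.
apply: (@le_trans _ _ (\sum_t `|G t u|)).
  apply: ler_sum => t _; rewrite normrM -[X in _ <= X]mul1r ler_wpM2r //.
rewrite /CG; apply: ler_sum => t _; rewrite [X in _ <= X](bigD1 u) //= lerDl; exact: sumr_ge0.
Qed.

Definition Gam (j1 : S -> X -> R) q s := \sum_a (j1 s a - j0 s a) * Qf q s a.

Lemma Vmix j1 d q : stoch j1 -> 0 <= d <= 1 ->
  V (mixj d j0 j1) q - V j0 q = d * \sum_s statd (Kc (mixj d j0 j1)) s * Gam j1 q s.
Proof.
move=> hj1 hd; rewrite perfdiff; last exact: mixj_stoch.
rewrite mulr_sumr; apply: eq_bigr => s _; rewrite /Gam mulrCA; congr (_ * _).
rewrite mulr_sumr; apply: eq_bigr => a _; rewrite /mixj; ring.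
Qed.

Lemma Jmix j1 d : stoch j1 -> 0 <= d <= 1 ->
  Jv (mixj d j0 j1) - Jv j0 =
  d * \sum_s statd (Kc (mixj d j0 j1)) s * Gam j1 (rt (V j0 r)) s +
  beta * (d * \sum_s statd (Kc (mixj d j0 j1)) s * Gam j1 r s) ^+ 2.
Proof.
move=> hj1 hd.
rewrite (Jv_decomp s0 (V j0 r) (mixj_stoch hd hj0 hj1)) (Jv_decomp s0 (V j0 r) hj0).
rewrite -(Vmix (rt (V j0 r)) hj1 hd) -(Vmix r hj1 hd); ring.
Qed.



Lemma sum_bound (w g : S -> R) : (forall s, `|w s| <= 1) -> `|\sum_s w s * g s| <= \sum_s `|g s|.
Proof.
move=> hw; apply: le_trans (ler_norm_sum _ _ _) _; apply: ler_sum => s _.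
by rewrite normrM -[X in _ <= X]mul1r ler_wpM2r.
Qed.

Lemma mixj0 j1 : mixj 0 j0 j1 = j0.
Proof. by apply/funext => s; apply/funext => a; rewrite /mixj subr0 mul1r mul0r addr0. Qed.

Lemma Dmix j1 : stoch j1 ->
  lim ((fun h => h^-1 * (Jv (mixj h j0 j1) - Jv j0)) @ 0^'+) =
  \sum_s pi0 s * Gam j1 (rt (V j0 r)) s.
Proof.
move=> hj1.
set Gt := Gam j1 (rt (V j0 r)); set Gr := Gam j1 r.
apply: (@lim_right _ _ _ (CG * \sum_s `|Gt s| + `|beta| * (\sum_s `|Gr s|) ^+ 2)) => h hh.
have hd : 0 <= h <= 1 by case/andP: hh => h0 h1; rewrite ltW.
have h0 : 0 < h by case/andP: hh.
rewrite Jmix //.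
set pd := statd (Kc (mixj h j0 j1)).
have [[pd0 pd1] _] := stat_dist s0 (mixj_stoch hd hj0 hj1).
set B := \sum_s pd s * Gr s.
have -> : h^-1 * (h * \sum_s pd s * Gt s + beta * (h * B) ^+ 2) =
          \sum_s pd s * Gt s + beta * h * B ^+ 2.
  by field; rewrite gt_eqF.
have e1 : `|\sum_s pd s * Gt s - \sum_s pi0 s * Gt s| <= h * (CG * \sum_s `|Gt s|).
  rewrite -sumrB; under eq_bigr do rewrite -mulrBl.
  apply: le_trans (ler_norm_sum _ _ _) _.
  rewrite mulrA mulr_sumr; apply: ler_sum => s _.
  rewrite normrM ler_wpM2r //; exact: pert.
have e2 : `|beta * h * B ^+ 2| <= h * (`|beta| * (\sum_s `|Gr s|) ^+ 2).
  have hB : `|B| <= \sum_s `|Gr s|.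
    apply: sum_bound => s; have := dist_le1 s (proj1 (stat_dist s0 (mixj_stoch hd hj0 hj1))).
    by move=> /andP[a b]; rewrite ger0_norm.
  rewrite normrM normrX normrM (gtr0_norm h0) (mulrC `|beta| h) -mulrA.
  apply: ler_wpM2l; first exact: ltW.
  apply: ler_wpM2l => //.
  by rewrite lerXn2r // ?nnegrE //; apply: sumr_ge0.
rewrite [X in _ <= X]mulrC mulrDr.
set u := \sum_s pd s * Gt s.
rewrite (_ : u + beta * h * B ^+ 2 - _ = (u - \sum_s pi0 s * Gt s) + beta * h * B ^+ 2); last by ring.
apply: le_trans (ler_normD _ _) _; exact: lerD.
Qed.
End Base. End Core.

Lemma sum_prod_dffun (R : comNzRingType) (I : finType) (T_ : I -> finType) (F : forall i, T_ i -> R) :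
  \sum_(a : {dffun forall i, T_ i}) \prod_i F i (a i) = \prod_i \sum_(b : T_ i) F i b.
Proof.
pose P_ := fun i => [ffun b => F i b].
transitivity (\sum_(t : fprod T_) \prod_(i in I) P_ i (t i)).
  rewrite (reindex (@fprod_of_dffun I T_)); last exact/onW_bij/fprod_of_dffun_bij.
  by apply: eq_bigr => a _; apply: eq_bigr => i _; rewrite /P_ ffunE fprodE.
rewrite big_fprod.
transitivity (\prod_i \sum_(j in tagged_with T_ i) untag 0 (P_ i) j); last first.
  apply: eq_bigr => i _; rewrite (big_tag (fun i b => F i b) i); apply: eq_bigr => j _.
  by rewrite /untag; case: eqP => // e; rewrite ffunE.
by rewrite bigA_distr_big_dep.
Qed.

Section Game.
Variables (R : realType) (N : nat) (S : finType) (A : 'I_N -> finType).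

Lemma jprob_stoch (mu : jpolicy R S A) : is_jpolicy mu -> stoch (jprob mu).
Proof.
move=> hmu s; split.
  by move=> a; apply: prodr_ge0 => i _; case: (hmu i s).
rewrite /jprob; have := sum_prod_dffun (fun i (b : A i) => mu i s b).
rewrite /jact => ->; apply: big1 => i _; by case: (hmu i s).
Qed.

Lemma jprob_dev (mut : jpolicy R S A) i (nu : S -> A i -> R) s a :
  jprob (dev mut nu) s a = nu s (a i) * \prod_(j | j != i) mut j s (a j).
Proof.
rewrite /jprob (bigD1 i) //=.
have -> : @dev R N S A mut i nu i = nu by exact: dfwith_in.
congr (_ * _); apply: eq_bigr => j ji.
have -> // : @dev R N S A mut i nu j = mut j by apply: dfwith_out; rewrite eq_sym.
Qed.

Lemma jprob_split (mut : jpolicy R S A) i s a :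
  jprob mut s a = mut i s (a i) * \prod_(j | j != i) mut j s (a j).
Proof. by rewrite /jprob (bigD1 i). Qed.

Lemma dev_pol (mut : jpolicy R S A) i (nu : S -> A i -> R) :
  is_jpolicy mut -> is_policy nu -> is_jpolicy (dev mut nu).
Proof.
move=> hm hn j; case: (eqVneq i j) => [<-|ij].
  by have -> : @dev R N S A mut i nu i = nu by exact: dfwith_in.
by have -> : @dev R N S A mut i nu j = mut j by exact: dfwith_out.
Qed.

Lemma mixp_pol i d (a b : S -> A i -> R) : 0 <= d <= 1 ->
  is_policy a -> is_policy b -> is_policy (mixp d a b).
Proof.
move=> /andP[d0 d1] ha hb s; case: (ha s) => a0 a1; case: (hb s) => b0 b1; split.
  move=> c; rewrite /mixp; apply: addr_ge0; apply: mulr_ge0 => //; by rewrite subr_ge0.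
rewrite /mixp big_split /= -!mulr_sumr a1 b1; ring.
Qed.

Lemma jprob_mix (mut : jpolicy R S A) i d (mu : S -> A i -> R) :
  jprob (dev mut (mixp d (mut i) mu)) = mixj d (jprob mut) (jprob (dev mut mu)).
Proof.
apply/funext => s; apply/funext => a.
by rewrite /mixj !jprob_dev (jprob_split mut i) /mixp; ring.
Qed.

End Game.

Lemma posmin (R : realType) (T : finType) (f : T -> R) : (forall t, 0 < f t) ->
  exists p : R, 0 < p <= 1 /\ forall t, p <= f t.
Proof.
move=> hf.
have s0 : 0 <= \sum_t (f t)^-1 by apply: sumr_ge0 => t _; rewrite invr_ge0 ltW.
have q0 : 0 < 1 + \sum_t (f t)^-1 by lra.
exists (1 + \sum_t (f t)^-1)^-1; split.
  rewrite invr_gt0 q0 /= invf_le1 //; lra.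
move=> t; rewrite -[f t]invrK lef_pV2 ?posrE ?invr_gt0 //.
rewrite (bigD1 t) //=.
have : 0 <= \sum_(i | i != t) (f i)^-1 by apply: sumr_ge0 => i _; rewrite invr_ge0 ltW.
lra.
Qed.

Lemma le_sum_term (R : realType) (T : finType) (F : T -> R) x :
  (forall y, 0 <= F y) -> F x <= \sum_y F y.
Proof. by move=> h; rewrite (bigD1 x) //= lerDl; apply: sumr_ge0. Qed.

Section Main.
Variables (R : realType) (N : nat) (S : finType) (A : 'I_N -> finType).
Variables (P : S -> jact A -> S -> R) (r : S -> jact A -> R) (beta : R).
Hypothesis beta0 : 0 <= beta.
Hypothesis P0 : forall s a t, 0 <= P s a t.
Hypothesis P1 : forall s a, \sum_t P s a t = 1.
Hypothesis herg : forall mu : jpolicy R S A, is_jpolicy mu -> ergodic (chain P mu).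
Variable mut : jpolicy R S A.
Arguments mut : clear implicits.
Hypothesis hmut : is_jpolicy mut.
Variable s0 : S.
Let j0 := jprob mut.
Let hj0 : stoch j0 := jprob_stoch hmut.
Let erg0 : ergodic (Kc P j0) := herg hmut.
Variable G : S -> S -> R.
Hypothesis hG : forall s u : S,
 \sum_t (fun s0 t0 : S =>
     (if s0 == t0 then 1 else 0) - Kc P j0 s0 t0 + statd (Kc P j0) t0) s t * G t u =
 (s == u)%:R.
Let pi0 := statd (Kc P j0).
Let rtt := rt r beta (V P j0 r).

Definition Gm q i (nu : S -> A i -> R) s := Gam P j0 G (jprob (dev mut nu)) q s.

Lemma J_Jv (mu : jpolicy R S A) : J P r beta mu = Jv P r beta (jprob mu).
Proof. by []. Qed.
Lemma eta_V (mu : jpolicy R S A) : etaR P r mu = V P (jprob mu) r.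
Proof. by []. Qed.

Lemma L_D i (nu : S -> A i -> R) : is_policy nu ->
  Dder P r beta mut nu = \sum_s pi0 s * Gm rtt nu s.
Proof.
move=> hnu; rewrite /Dder.
have -> : (fun d => J P r beta (dev mut (mixp d (mut i) nu))) =
          (fun d => Jv P r beta (mixj d j0 (jprob (dev mut nu)))).
  by apply/funext => d /=; rewrite J_Jv jprob_mix.
rewrite /rderiv0 /= mixj0; exact: (Dmix P0 P1 r beta s0 hj0 hG (jprob_stoch (dev_pol hmut hnu))).
Qed.

Definition pdm d i (nu : S -> A i -> R) := statd (Kc P (mixj d j0 (jprob (dev mut nu)))).

Lemma L_J i (nu : S -> A i -> R) d : is_policy nu -> 0 <= d <= 1 ->
  J P r beta (dev mut (mixp d (mut i) nu)) - J P r beta mut =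
  d * \sum_s pdm d nu s * Gm rtt nu s + beta * (d * \sum_s pdm d nu s * Gm r nu s) ^+ 2.
Proof.
move=> hnu hd; rewrite !J_Jv jprob_mix.
exact: (Jmix P0 P1 r beta s0 hj0 hG (jprob_stoch (dev_pol hmut hnu)) hd).
Qed.

Lemma L_eta i (nu : S -> A i -> R) d : is_policy nu -> 0 <= d <= 1 ->
  etaR P r (dev mut (mixp d (mut i) nu)) - etaR P r mut =
  d * \sum_s pdm d nu s * Gm r nu s.
Proof.
move=> hnu hd; rewrite !eta_V jprob_mix.
exact: (Vmix P0 P1 s0 hj0 hG r (jprob_stoch (dev_pol hmut hnu)) hd).
Qed.

Lemma pdm_dist i (nu : S -> A i -> R) d : is_policy nu -> 0 <= d <= 1 -> is_dist (pdm d nu).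
Proof.
move=> hnu hd; exact: (stat_dist P0 P1 s0 (mixj_stoch hd hj0 (jprob_stoch (dev_pol hmut hnu)))).1.
Qed.

Lemma pdm_pos i (nu : S -> A i -> R) d s : is_policy nu -> 0 <= d <= 1 -> 0 < pdm d nu s.
Proof.
move=> hnu hd.
have hj := mixj_stoch hd hj0 (jprob_stoch (dev_pol hmut hnu)).
apply: (stat_pos (Kc_stoch P0 P1 hj)) (stat_dist P0 P1 s0 hj) s.
have := herg (dev_pol hmut (mixp_pol hd (hmut i) hnu)).
by rewrite /chain -/(Kc P (jprob _)) jprob_mix.
Qed.

Lemma pdm_near i (nu : S -> A i -> R) d s : is_policy nu -> 0 <= d <= 1 ->
  `|pdm d nu s - pi0 s| <= d * CG G.
Proof.
move=> hnu hd; exact: (pert P0 P1 s0 hj0 hG s (jprob_stoch (dev_pol hmut hnu)) hd).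
Qed.

Lemma pi0_pos' s : 0 < pi0 s.
Proof. exact: (pi0_pos P0 P1 s0 hj0 erg0). Qed.

Definition rho i s (a : jact A) := \prod_(j | j != i) mut j s (a j).

Lemma Gm_expand q i (nu : S -> A i -> R) s :
  Gm q nu s = \sum_(a : jact A) (nu s (a i) - mut i s (a i)) * rho i s a * Qf P j0 G q s a.
Proof.
rewrite /Gm /Gam; apply: eq_bigr => a _; rewrite jprob_dev /j0 (jprob_split mut i) /rho; ring.
Qed.

Lemma Gm_row q i (nu nu' : S -> A i -> R) s : nu s = nu' s -> Gm q nu s = Gm q nu' s.
Proof. by move=> e; rewrite !Gm_expand e. Qed.

Lemma Gm_mut q i s : Gm q (mut i) s = 0.
Proof. by rewrite Gm_expand big1 // => a _; rewrite subrr !mul0r. Qed.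

Definition dlt i (b : A i) : S -> A i -> R := fun _ c => (c == b)%:R.

Lemma dlt_pol i (b : A i) : is_policy (dlt b).
Proof.
move=> s; split; first by move=> c; rewrite /dlt ler0n.
by rewrite /dlt (bigD1 b) //= eqxx big1 ?addr0 // => c /negbTE ->.
Qed.

Lemma Gm_lin q i (nu : S -> A i -> R) s : is_policy nu ->
  Gm q nu s = \sum_b nu s b * Gm q (dlt b) s.
Proof.
move=> hnu; have [_ n1] := hnu s.
rewrite Gm_expand.
under [RHS]eq_bigr do rewrite Gm_expand mulr_sumr.
rewrite exchange_big /=; apply: eq_bigr => a _.
under [RHS]eq_bigr do rewrite !mulrA.
rewrite -!mulr_suml; congr (_ * _ * _).
under eq_bigr do rewrite /dlt mulrBr.
rewrite sumrB -mulr_suml n1 mul1r; congr (_ - _).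
rewrite (bigD1 (a i)) //= eqxx mulr1 big1 ?addr0 // => b /negbTE.
by rewrite eq_sym => ->; rewrite mulr0.
Qed.

Definition esb i (s : S) (b : A i) : S -> A i -> R :=
  fun t => if t == s then dlt b t else mut i t.

Lemma esb_pol i s (b : A i) : is_policy (esb s b).
Proof. by move=> t; rewrite /esb; case: (t == s); [exact: dlt_pol | exact: hmut]. Qed.

Lemma Gm_esb q i s (b : A i) t :
  Gm q (esb s b) t = if t == s then Gm q (dlt b) s else 0.
Proof.
case: (eqVneq t s) => [->|ts].
  by apply: Gm_row; rewrite /esb eqxx.
by rewrite (@Gm_row q i _ (mut i)) ?Gm_mut // /esb (negbTE ts).
Qed.

Lemma D_esb q i s (b : A i) (w : S -> R) :
  \sum_t w t * Gm q (esb s b) t = w s * Gm q (dlt b) s.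
Proof.
under eq_bigr do rewrite Gm_esb.
rewrite (bigD1 s) //= eqxx big1 ?addr0 // => t /negbTE ->; by rewrite mulr0.
Qed.



Lemma pol_le1 i (nu : S -> A i -> R) s b : is_policy nu -> 0 <= nu s b <= 1.
Proof.
move=> h; case: (h s) => n0 n1; rewrite n0 /= -n1; exact: le_sum_term.
Qed.

Hypothesis hfos : first_order_stationary P r beta mut.

Definition alpha i s (b : A i) := Gm rtt (dlt b) s.
Definition betaf i s (b : A i) := Gm r (dlt b) s.

Lemma alpha_le0 i s (b : A i) : alpha s b <= 0.
Proof.
have := hfos (esb_pol s b); rewrite (L_D (esb_pol s b)) => h.
have e := (@D_esb rtt i s b pi0).
move: h; rewrite [X in X <= _ -> _]e => h.
by rewrite -(pmulr_rle0 _ (pi0_pos' s)).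
Qed.

Lemma Gt_le0 i (nu : S -> A i -> R) s : is_policy nu -> Gm rtt nu s <= 0.
Proof.
move=> hnu; rewrite Gm_lin //; apply: sumr_le0 => b _; apply: mulr_ge0_le0.
  by case: (hnu s).
exact: alpha_le0.
Qed.

Lemma negGt i (nu : S -> A i -> R) s : is_policy nu ->
  - Gm rtt nu s = \sum_b nu s b * `|alpha s b|.
Proof.
move=> hnu; rewrite Gm_lin // -sumrN; apply: eq_bigr => b _.
by rewrite ler0_norm ?alpha_le0 // mulrN.
Qed.

Lemma D_le_E i (nu : S -> A i -> R) : is_policy nu ->
  - \sum_s - Gm rtt nu s <= \sum_s pi0 s * Gm rtt nu s.
Proof.
move=> hnu; rewrite sumrN opprK; apply: ler_sum => s _.
have := Gt_le0 s hnu; have := pi0_pos' s; have := dist_le1 s (proj1 (pi0_stat P0 P1 s0 hj0)).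
move=> /andP[a b] c e; nra.
Qed.

Section Unif.
Hypothesis Hz : forall i s (b : A i), alpha s b = 0 -> betaf s b = 0.

Let K := \sum_i \sum_s \sum_(b : A i) `|betaf s b| / `|alpha s b|.
Let Am := \sum_i \sum_s \sum_(b : A i) `|alpha s b|.

Lemma K0 : 0 <= K.
Proof. by apply: sumr_ge0 => i _; apply: sumr_ge0 => s _; apply: sumr_ge0 => b _; apply: divr_ge0. Qed.

Lemma Am0 : 0 <= Am.
Proof. by apply: sumr_ge0 => i _; apply: sumr_ge0 => s _; apply: sumr_ge0 => b _. Qed.

Lemma betaK i s (b : A i) : `|betaf s b| <= K * `|alpha s b|.
Proof.
case: (eqVneq (alpha s b) 0) => [a0|an0].
  by rewrite Hz // a0 !normr0 mulr0.
have h : `|betaf s b| / `|alpha s b| <= K.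
  have h1 := @le_sum_term R (A i) (fun b => `|betaf s b| / `|alpha s b|) b
     (fun y => divr_ge0 (normr_ge0 _) (normr_ge0 _)).
  have h2 := @le_sum_term R S (fun s => \sum_(b : A i) `|betaf s b| / `|alpha s b|) s
     (fun y => sumr_ge0 _ (fun c _ => divr_ge0 (normr_ge0 _) (normr_ge0 _))).
  have h3 := @le_sum_term R 'I_N (fun i => \sum_s \sum_(b : A i) `|betaf s b| / `|alpha s b|) i
     (fun y => sumr_ge0 _ (fun t _ => sumr_ge0 _ (fun c _ => divr_ge0 (normr_ge0 _) (normr_ge0 _)))).
  rewrite /K; simpl in h1, h2, h3; lra.
rewrite -[X in X <= _](@divfK _ `|alpha s b|) ?normr_eq0 //.
by apply: ler_wpM2r.
Qed.

Lemma Gr_le i (nu : S -> A i -> R) s : is_policy nu ->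
  `|Gm r nu s| <= K * - Gm rtt nu s.
Proof.
move=> hnu; rewrite negGt // Gm_lin // mulr_sumr.
apply: le_trans (ler_norm_sum _ _ _) _; apply: ler_sum => b _.
have /andP[n0 _] := pol_le1 s b hnu.
rewrite normrM (ger0_norm n0) mulrCA; apply: ler_wpM2l => //; exact: betaK.
Qed.

Lemma E_le i (nu : S -> A i -> R) : is_policy nu -> \sum_s - Gm rtt nu s <= Am.
Proof.
move=> hnu.
have h3 := @le_sum_term R 'I_N (fun i => \sum_s \sum_(b : A i) `|alpha s b|) i
     (fun y => sumr_ge0 _ (fun t _ => sumr_ge0 _ (fun c _ => normr_ge0 _))).
apply: (le_trans _ h3) => /=.
apply: ler_sum => s _; rewrite negGt //; apply: ler_sum => b _.
have /andP[n0 n1] := pol_le1 s b hnu.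
by rewrite -[X in _ <= X]mul1r ler_wpM2r.
Qed.

Lemma unif : exists p dbar : R, 0 < p /\ 0 < dbar <= 1 /\
  forall d, 0 < d <= dbar -> forall i (nu : S -> A i -> R), is_policy nu ->
  J P r beta (dev mut (mixp d (mut i) nu)) - J P r beta mut <=
  - (d * p / 4) * \sum_s - Gm rtt nu s.
Proof.
have [p [/andP[hp hp1] hpl]] := posmin pi0_pos'.
set C := CG G.
have C0 : 0 <= C by apply: sumr_ge0 => t _; apply: sumr_ge0.
have KK := K0; have AA := Am0.
set Bt := beta * K ^+ 2 * Am.
have B0 : 0 <= Bt by rewrite /Bt !mulr_ge0 // exprn_ge0.
have den : 0 < 4 * (1 + C) * (1 + Bt) by rewrite !mulr_gt0 //; lra.
exists p, (p / (4 * (1 + C) * (1 + Bt))); split => //; split.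
  rewrite divr_gt0 //= ler_pdivrMr // mul1r.
  have : 1 <= (1 + C) * (1 + Bt) by nra.
  nra.
move=> d /andP[d0 dle] i nu hnu.
have hd : 0 <= d <= 1.
  rewrite ltW //=; apply: le_trans dle _.
  rewrite ler_pdivrMr // mul1r.
  have : 1 <= (1 + C) * (1 + Bt) by nra.
  nra.
have key : d * (4 * (1 + C) * (1 + Bt)) <= p by rewrite -ler_pdivlMr.
have dC : d * C <= p / 4 by nra.
have dB : d * Bt <= p / 4 by nra.
rewrite L_J //.
set E := \sum_s - Gm rtt nu s.
have E0 : 0 <= E by apply: sumr_ge0 => s _; rewrite oppr_ge0; exact: Gt_le0.
have EA : E <= Am := E_le hnu.
have T1 : \sum_s pdm d nu s * Gm rtt nu s <= - (p / 2) * E.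
  rewrite /E mulr_sumr; apply: ler_sum => s _.
  have := pdm_near s hnu hd; rewrite -/C ler_norml => /andP[h1 h2].
  have := hpl s; have := Gt_le0 s hnu => g0 hs.
  have hpd : 0 <= pdm d nu s - p / 2 by lra.
  by rewrite mulrNN -subr_le0 -mulrBl; exact: mulr_ge0_le0 hpd g0.
set B := \sum_s pdm d nu s * Gm r nu s.
have T2 : `|B| <= K * E.
  apply: le_trans (sum_bound _ _) _.
    move=> s; have /andP[a b] := dist_le1 s (pdm_dist hnu hd); by rewrite ger0_norm.
  rewrite /E mulr_sumr; apply: ler_sum => s _; exact: Gr_le.
have T3 : B ^+ 2 <= K ^+ 2 * Am * E.
  move: T2; rewrite ler_norml => /andP[b1 b2].
  have : K * E <= K * Am by apply: ler_wpM2l.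
  have : 0 <= K * E by apply: mulr_ge0.
  move=> h1 h2; nra.
have T4 : beta * (d * B) ^+ 2 <= d * (p / 4) * E.
  have : beta * (d * B) ^+ 2 <= d * (d * Bt) * E.
    rewrite exprMn /Bt.
    have : 0 <= beta * d ^+ 2 by rewrite mulr_ge0 // exprn_ge0 // ltW.
    move=> h; have := ler_wpM2l h T3; rewrite !mulrA.
    move=> h'; apply: le_trans h' _; rewrite le_eqVlt; apply/orP; left; apply/eqP; ring.
  move=> h; apply: le_trans h _.
  rewrite -mulrA -[X in _ <= X]mulrA; apply: ler_wpM2l; first exact: ltW.
  exact: (ler_wpM2r E0 dB).
have T5 : d * \sum_s pdm d nu s * Gm rtt nu s <= d * (- (p / 2) * E).
  by apply: ler_wpM2l => //; apply: ltW.
lra.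
Qed.

End Unif.

Lemma Gt_zero i (nu : S -> A i -> R) : is_policy nu -> Dder P r beta mut nu = 0 ->
  forall s, Gm rtt nu s = 0.
Proof.
move=> hnu; rewrite (L_D hnu) => h0 s.
have h : \sum_t - (pi0 t * Gm rtt nu t) = 0 by rewrite sumrN h0 oppr0.
have := psumr_eq0P (P := predT) (F := fun t => - (pi0 t * Gm rtt nu t)) _ h (isT : predT s).
  move=> /(_ _) /eqP; rewrite oppr_eq0 mulf_eq0 gt_eqF ?pi0_pos' //= => /(_ _)/eqP; apply.
move=> t _; rewrite oppr_ge0; apply: mulr_ge0_le0; first exact: ltW (pi0_pos' t).
exact: Gt_le0.
Qed.

Lemma part1 : (forall (i : 'I_N) (mu : S -> A i -> R), is_policy mu -> mu <> mut i ->
      Dder P r beta mut mu < 0) -> strict_local_NE P r beta mut.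
Proof.
move=> H.
have Hz : forall i s (b : A i), alpha s b = 0 -> betaf s b = 0.
  move=> i s b a0.
  have e : esb s b = mut i.
    case: (pselect (esb s b = mut i)) => // ne.
    have := H i (esb s b) (esb_pol s b) ne.
    by rewrite (L_D (esb_pol s b)) (@D_esb rtt i s b pi0) -/(alpha s b) a0 mulr0 ltxx.
  rewrite /betaf; have := Gm_esb r s b s; rewrite eqxx e Gm_mut => <-; by [].
have [p [dbar [hp [hdb H']]]] := unif Hz.
exists dbar; split => // d hd i nu hnu ne.
have := H' d hd i nu hnu.
set E := \sum_s - Gm rtt nu s.
have E0 : 0 < E.
  have := H i nu hnu ne; rewrite (L_D hnu) => hD.
  have := D_le_E hnu; rewrite -/E => hE; lra.
have : 0 < d * p / 4 * E.
  case/andP: hd => d0 _; apply: mulr_gt0 => //; apply: mulr_gt0 => //; exact: mulr_gt0.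
move=> h1 h2.
have : J P r beta (dev mut (mixp d (mut i) nu)) - J P r beta mut < 0.
  apply: le_lt_trans h2 _; rewrite mulNr oppr_lt0 //.
lra.
Qed.

Lemma part2b : (forall (i : 'I_N) (mu : S -> A i -> R), is_policy mu ->
       Dder P r beta mut mu = 0 ->
       exists dbar : R, 0 < dbar <= 1 /\
         forall d : R, 0 < d <= dbar ->
           etaR P r (dev mut (mixp d (mut i) mu)) = etaR P r mut) ->
  local_NE P r beta mut.
Proof.
move=> H.
have Hz : forall i s (b : A i), alpha s b = 0 -> betaf s b = 0.
  move=> i s b a0.
  have hD : Dder P r beta mut (esb s b) = 0.
    by rewrite (L_D (esb_pol s b)) (@D_esb rtt i s b pi0) -/(alpha s b) a0 mulr0.
  have [db [/andP[db0 db1] Hdb]] := H i (esb s b) (esb_pol s b) hD.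
  have hd : 0 <= db <= 1 by rewrite ltW.
  have := Hdb db; rewrite db0 lexx => /(_ isT) /eqP; rewrite -subr_eq0 => /eqP.
  rewrite (L_eta (esb_pol s b) hd) (@D_esb r i s b (pdm db (esb s b))) -/(betaf s b).
  have hp := pdm_pos s (esb_pol s b) hd.
  move/eqP; rewrite mulf_eq0 (gt_eqF db0) /= mulf_eq0 (gt_eqF hp) /=; exact/eqP.
have [p [dbar [hp [hdb H']]]] := unif Hz.
exists dbar; split => // d hd i nu hnu.
have := H' d hd i nu hnu.
set E := \sum_s - Gm rtt nu s.
have E0 : 0 <= E by apply: sumr_ge0 => s _; rewrite oppr_ge0; exact: Gt_le0.
have : 0 <= d * p / 4 * E.
  case/andP: hd => d0 _; apply: mulr_ge0 => //; apply: mulr_ge0 => //; apply: mulr_ge0; exact: ltW.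
move=> h1 h2; lra.
Qed.

Lemma part2a : local_NE P r beta mut ->
  (forall (i : 'I_N) (mu : S -> A i -> R), is_policy mu ->
       Dder P r beta mut mu = 0 ->
       exists dbar : R, 0 < dbar <= 1 /\
         forall d : R, 0 < d <= dbar ->
           etaR P r (dev mut (mixp d (mut i) mu)) = etaR P r mut).
Proof.
move=> [dbar [/andP[db0 db1] H]] i nu hnu hD.
have G0 := Gt_zero hnu hD.
exists dbar; split; first by rewrite db0.
move=> d /andP[d0 dle].
have hd : 0 <= d <= 1 by rewrite ltW //= (le_trans dle).
apply/eqP; rewrite -subr_eq0 (L_eta hnu hd); apply/eqP.
case: (eqVneq beta 0) => [b0|bn0].
  have e : rtt = r.
    by apply/funext => s; apply/funext => a; rewrite /rtt /rt b0 mul0r subr0.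
  by rewrite big1 ?mulr0 // => s _; rewrite -e G0 mulr0.
have bp : 0 < beta by rewrite lt_neqAle eq_sym bn0 beta0.
have := H d _ i nu hnu; rewrite d0 dle => /(_ isT).
rewrite -subr_le0 (L_J hnu hd) big1 ?mulr0 ?add0r; last by move=> s _; rewrite G0 mulr0.
set x := d * _ => hx.
have : x ^+ 2 <= 0 by rewrite -(pmulr_rle0 _ bp).
by move=> h; apply/eqP; rewrite -sqrf_eq0 eq_le h sqr_ge0.
Qed.
End Main.

Unset Implicit Arguments. Set Strict Implicit.
Local Close Scope classical_set_scope.

Theorem theorem3 (R : realType) (N : nat) (S : finType) (A : 'I_N -> finType)
  (P : S -> jact A -> S -> R) (r : S -> jact A -> R) (beta : R) :
  0 <= beta ->
  is_kernel P ->
  (forall mu : jpolicy R S A, is_jpolicy mu -> ergodic (chain P mu)) ->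
  forall mut : jpolicy R S A, is_jpolicy mut ->
  first_order_stationary P r beta mut ->
  ((forall (i : 'I_N) (mu : S -> A i -> R), is_policy mu -> mu <> mut i ->
      Dder P r beta mut mu < 0) ->
    strict_local_NE P r beta mut)
  /\
  ((exists (i : 'I_N) (mu : S -> A i -> R), is_policy mu /\
      Dder P r beta mut mu = 0) ->
    (local_NE P r beta mut <->
     forall (i : 'I_N) (mu : S -> A i -> R), is_policy mu ->
       Dder P r beta mut mu = 0 ->
       exists dbar : R, 0 < dbar <= 1 /\
         forall d : R, 0 < d <= dbar ->
           etaR P r (dev mut (mixp d (mut i) mu)) = etaR P r mut)).
Proof.
move=> beta0 hP herg mut hmut hfos.
have P0 : forall s a t, 0 <= P s a t by move=> s a t; case: (hP s a).
have P1 : forall s a, \sum_t P s a t = 1 by move=> s a; case: (hP s a).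
case: (pickP (fun _ : S => true)) => [s0 _ | hS]; last first.
  have e0 : forall F : S -> R, \sum_s F s = 0.
    by move=> F; rewrite big1 // => s _; have := hS s.
  have Jz : forall mu, J P r beta mu = 0.
    by move=> mu; rewrite /J /etaR /zeta !e0 mulr0 subr0.
  split.
    move=> _; exists 1; split; first by rewrite ltr01 /=.
    move=> d _ i mu _ ne; exfalso; apply: ne.
    by apply/funext => s; have := hS s.
  move=> _; split.
    move=> _ i mu _ _; exists 1; split; first by rewrite ltr01 /=.
    by move=> d _; rewrite /etaR !e0.
  move=> _; exists 1; split; first by rewrite ltr01 /=.
  by move=> d _ i mu _; rewrite !Jz.
have hj0 := jprob_stoch hmut.
have erg0 : ergodic (Kc P (jprob mut)) := herg mut hmut.
have [G hG] := G_exists P0 P1 s0 hj0 erg0.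
split; first exact: (part1 beta0 P0 P1 herg hmut s0 hG hfos).
move=> _; split.
  exact: (part2a beta0 P0 P1 herg hmut s0 hG hfos).
exact: (part2b beta0 P0 P1 herg hmut s0 hG hfos).
Qed.
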